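(* Let $\mathcal{L}$ be a propositional language, $\mathcal{L}_1$ an expansion of $\mathcal{L}$ with induced quantale embedding $i:\wp\Sigma_{\mathcal{L}}\to\wp\Sigma_{\mathcal{L}_1}$, and $(D,\vdash)$ a deductive system over $\mathcal{L}$ with associated nucleus $\gamma$ and $\wp\Sigma_{\mathcal{L}}$-module of theories $\mathrm{Th}$. Let $D_1$ be the domain of the same type as $D$ over $\mathcal{L}_1$. Then there exists a consequence relation $\vdash_1$ on $\wp D_1$ whose $\wp\Sigma_{\mathcal{L}_1}$-module of theories $\mathrm{Th}_1$ is isomorphic to $\wp\Sigma_{\mathcal{L}_1}\otimes_{\wp\Sigma_{\mathcal{L}}}\mathrm{Th}$.
   Context: A quantale is a complete lattice with a monoid product distributing over arbitrary joins; a left $Q$-module is a complete lattice with an associative unital action distributing over joins in each argument; a $Q$-module nucleus is a closure operator $\gamma$ with $a\gamma(u)\le\gamma(au)$, with image a $Q$-module under join $\gamma(\bigvee\cdot)$ and action $\gamma(au)$. For a language $\mathcal{L}$ and fixed denumerable $\mathrm{Var}$: $\mathit{Fm}_{\mathcal{L}}$ term algebra, $\Sigma_{\mathcal{L}}$ monoid of substitutions, $\wp\Sigma_{\mathcal{L}}$ quantale of subsets (union, elementwise composition, unit $\{\mathrm{id}\}$). A domain is formulas, equations $\mathit{Fm}_{\mathcal{L}}^2$ or sequents $\bigcup_{(m,n)\in T}\mathit{Fm}_{\mathcal{L}}^m\times\mathit{Fm}_{\mathcal{L}}^n$; ''same type'' means the same kind (and same $T$). $\wp D$ is a left $\wp\Sigma_{\mathcal{L}}$-module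 via $\Sigma\cdot\Phi=\{\sigma(\varphi)\}$. A (structural) consequence relation corresponds to the nucleus $\gamma(\Phi)=\{\psi:\Phi\vdash\psi\}$ on $\wp D$ and has module of theories $(\wp D)_\gamma$. An expansion $\mathcal{L}_1$ contains all connectives of $\mathcal{L}$ with the same arities; $i$ maps each substitution to the unique $\mathcal{L}_1$-substitution with the same values on $\mathrm{Var}$, making $\wp\Sigma_{\mathcal{L}_1}$ a right $\wp\Sigma_{\mathcal{L}}$-module. The tensor product $M_1\otimes_Q M_2$ (right module $M_1$, left module $M_2$) is the quotient of the free sup-lattice $\wp(M_1\times M_2)$ by the sup-lattice congruence generated by $(\{(\bigvee X,y)\},\bigcup_{x\in X}\{(x,y)\})$, $(\{(x,\bigvee Y)\},\bigcup_{y\in Y}\{(x,y)\})$, $(\{(xa,y)\},\{(x,ay)\})$, a left $\wp\Sigma_{\mathcal{L}_1}$-module via the first factor. *)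

(* Defs.v *)
From mathcomp Require Import all_boot.
From Stdlib Require Import FunctionalExtensionality PropExtensionality.
Set Implicit Arguments. Unset Strict Implicit. Unset Printing Implicit Defensive.

Definition pset (X : Type) := X -> Prop.

Record Lang := { con : Type; ar : con -> nat }.

Inductive Fm (L : Lang) : Type :=
| Var : nat -> Fm L
| App : forall c : con L, ('I_(ar c) -> Fm L) -> Fm L.
Arguments Var {L} _.

Definition Subst (L : Lang) := nat -> Fm L.

Fixpoint subst (L : Lang) (s : Subst L) (t : Fm L) : Fm L :=
  match t with
  | Var v => s v
  | App c f => @App L c (fun i => subst s (f i))
  end.

Definition scomp (L : Lang) (s t : Subst L) : Subst L := fun v => subst s (t v).

(** The quantale of subsets of substitutions: union, elementwise composition,
    unit {id}. *)
Definition qmul (L : Lang) (A B : pset (Subst L)) : pset (Subst L) :=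
  fun u => exists s t, A s /\ B t /\ u = scomp s t.
Definition qunion (L : Lang) (S : pset (pset (Subst L))) : pset (Subst L) :=
  fun s => exists A, S A /\ A s.

Record expansion (L L1 : Lang) := {
  emb : con L -> con L1;
  emb_inj : injective emb;
  emb_ar : forall c, ar (emb c) = ar c }.

Fixpoint embF (L L1 : Lang) (E : expansion L L1) (t : Fm L) : Fm L1 :=
  match t with
  | Var v => Var v
  | App c f => @App L1 (emb E c) (fun i => embF E (f (cast_ord (emb_ar E c) i)))
  end.

Definition iSub (L L1 : Lang) (E : expansion L L1) (s : Subst L) : Subst L1 :=
  fun v => embF E (s v).
Definition iset (L L1 : Lang) (E : expansion L L1) (a : pset (Subst L))
  : pset (Subst L1) := fun u => exists s, a s /\ u = iSub E s.

(** * Domains: formulas, equations, sequents of types in T *)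
Inductive DomKind := DFm | DEq | DSeq of (nat -> nat -> Prop).

Definition Dom (k : DomKind) (L : Lang) : Type :=
  match k with
  | DFm => Fm L
  | DEq => (Fm L * Fm L)%type
  | DSeq T => {p : seq (Fm L) * seq (Fm L) | T (size p.1) (size p.2)}
  end.

Lemma seq_subst_ok (L : Lang) (T : nat -> nat -> Prop) (s : Subst L)
  (p : seq (Fm L) * seq (Fm L)) :
  T (size p.1) (size p.2) ->
  T (size (map (subst s) p.1)) (size (map (subst s) p.2)).
Proof. by rewrite !size_map. Qed.

Definition dsubst (k : DomKind) (L : Lang) (s : Subst L) : Dom k L -> Dom k L :=
  match k return Dom k L -> Dom k L with
  | DFm => fun t => subst s t
  | DEq => fun e => (subst s e.1, subst s e.2)
  | DSeq T => fun x =>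
      exist (fun p : seq (Fm L) * seq (Fm L) => T (size p.1) (size p.2))
            (map (subst s) (sval x).1, map (subst s) (sval x).2)
            (@seq_subst_ok L T s (sval x) (svalP x))
  end.

Definition sact (k : DomKind) (L : Lang) (A : pset (Subst L)) (P : pset (Dom k L))
  : pset (Dom k L) := fun d => exists s x, A s /\ P x /\ d = dsubst s x.

Record conseq (k : DomKind) (L : Lang)
    (vd : pset (Dom k L) -> Dom k L -> Prop) : Prop := {
  cq_refl : forall P x, P x -> vd P x;
  cq_mono : forall P Q x, (forall y, P y -> Q y) -> vd P x -> vd Q x;
  cq_cut : forall P Q x, (forall y, Q y -> vd P y) -> vd Q x -> vd P x;
  cq_struct : forall s P x, vd P x -> vd (sact (fun t => t = s) P) (dsubst s x) }.

Definition gamma (k : DomKind) (L : Lang) (vd : pset (Dom k L) -> Dom k L -> Prop)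
  (P : pset (Dom k L)) : pset (Dom k L) := fun x => vd P x.

Definition theory (k : DomKind) (L : Lang) (vd : pset (Dom k L) -> Dom k L -> Prop)
  (P : pset (Dom k L)) : Prop := gamma vd P = P.

Record SupAct (Q : Type) := {
  car :> Type;
  jn : pset car -> car;
  act : Q -> car -> car }.

Definition module_iso (Q : Type) (M N : SupAct Q) : Prop :=
  exists f : car M -> car N,
    bijective f /\
    (forall S : pset (car M), f (jn S) = jn (fun y => exists x, S x /\ y = f x)) /\
    (forall a x, f (act a x) = act a (f x)).

Section Theories.
Variables (k : DomKind) (L : Lang) (vd : pset (Dom k L) -> Dom k L -> Prop).
Hypothesis H : conseq vd.

Lemma gamma_theory (P : pset (Dom k L)) : theory vd (gamma vd P).
Proof.
rewrite /theory /gamma.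
apply: FunctionalExtensionality.functional_extensionality => x.
apply: PropExtensionality.propositional_extensionality; split => Hx.
- by apply: (cq_cut H) Hx.
- by apply: (cq_refl H).
Qed.

Definition ThCar := {P : pset (Dom k L) | theory vd P}.
Definition th_jn (S : pset ThCar) : ThCar :=
  exist _ (gamma vd (fun x => exists P : ThCar, S P /\ sval P x)) (gamma_theory _).
Definition th_act (A : pset (Subst L)) (P : ThCar) : ThCar :=
  exist _ (gamma vd (sact A (sval P))) (gamma_theory _).

Definition ThMod : SupAct (pset (Subst L)) :=
  {| car := ThCar; jn := th_jn; act := th_act |}.
End Theories.

Section Tensor.
Variables (L L1 : Lang) (E : expansion L L1) (k : DomKind)
  (vd : pset (Dom k L) -> Dom k L -> Prop) (H : conseq vd).

Let M2 := ThMod H.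
Definition TX := (pset (Subst L1) * car M2)%type.

(** generating relations on the free sup-lattice pset TX *)
Definition tens_gen (A B : pset TX) : Prop :=
  (exists (Xs : pset (pset (Subst L1))) (y : car M2),
      A = (fun p => p = (qunion Xs, y)) /\ B = (fun p => Xs p.1 /\ p.2 = y))
  \/ (exists (x : pset (Subst L1)) (Ys : pset (car M2)),
      A = (fun p => p = (x, jn Ys)) /\ B = (fun p => p.1 = x /\ Ys p.2))
  \/ (exists (x : pset (Subst L1)) (a : pset (Subst L)) (y : car M2),
      A = (fun p => p = (qmul x (iset E a), y)) /\ B = (fun p => p = (x, act a y))).

Definition supcong (R : pset TX -> pset TX -> Prop) : Prop :=
  (forall A, R A A) /\ (forall A B, R A B -> R B A) /\
  (forall A B C, R A B -> R B C -> R A C) /\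
  (forall (I : Type) (F G : I -> pset TX), (forall i, R (F i) (G i)) ->
     R (fun p => exists i, F i p) (fun p => exists i, G i p)).

Definition tens_cong (A B : pset TX) : Prop :=
  forall R, supcong R -> (forall A B, tens_gen A B -> R A B) -> R A B.

Definition TCar := {C : pset (pset TX) | exists A, C = tens_cong A}.
Definition tcls (A : pset TX) : TCar := exist _ (tens_cong A) (ex_intro _ A erefl).

Definition t_jn (S : pset TCar) : TCar :=
  tcls (fun p => exists C A, S C /\ sval C A /\ A p).
Definition t_act (a : pset (Subst L1)) (C : TCar) : TCar :=
  tcls (fun p => exists A x y, sval C A /\ A (x, y) /\ p = (qmul a x, y)).

Definition TensorMod : SupAct (pset (Subst L1)) :=
  {| car := TCar; jn := t_jn; act := t_act |}.
End Tensor.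

(* Main.v *)
Require Import Defs.
From mathcomp Require Import all_boot.
From Stdlib Require Import FunctionalExtensionality PropExtensionality ProofIrrelevance.
Set Implicit Arguments. Unset Strict Implicit. Unset Printing Implicit Defensive.

Section FmLemmas.
Variable L : Lang.

Fixpoint Fm_ind2 (P : Fm L -> Prop) (HV : forall v, P (Var v))
  (HA : forall c f, (forall i, P (f i)) -> P (@App L c f)) (t : Fm L) : P t :=
  match t with
  | Var v => HV v
  | App c f => HA c f (fun i => Fm_ind2 HV HA (f i))
  end.

Lemma subst_comp (s t : Subst L) (x : Fm L) :
  subst s (subst t x) = subst (scomp s t) x.
Proof.
elim/Fm_ind2: x => [v|c f IH] //=.
congr (App _); apply: functional_extensionality => i; exact: IH.
Qed.
End FmLemmas.

Lemma sig_eqP (A : Type) (P : A -> Prop) (x y : {a | P a}) :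
  sval x = sval y -> x = y.
Proof.
case: x => a pa; case: y => b pb /= eab; subst b; f_equal; apply: proof_irrelevance.
Qed.

Section DomLemmas.
Variable k : DomKind.

Lemma dsubst_comp (X : Lang) (s t : Subst X) (d : Dom k X) :
  dsubst s (dsubst t d) = dsubst (scomp s t) d.
Proof.
case: k d => [d|d|T d] /=.
- exact: subst_comp.
- by case: d => a b; rewrite /= !subst_comp.
- case: d => [[l1 l2] p]; apply: sig_eqP => /=.
  by rewrite -!map_comp; congr pair; apply: eq_map => x /=; rewrite subst_comp.
Qed.
End DomLemmas.

Lemma seq_map_ok (X Y : Lang) (T : nat -> nat -> Prop) (f : Fm X -> Fm Y)
  (p : seq (Fm X) * seq (Fm X)) :
  T (size p.1) (size p.2) -> T (size (map f p.1)) (size (map f p.2)).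
Proof. by rewrite !size_map. Qed.

Lemma gen_ok (X : Lang) (T : nat -> nat -> Prop) (Y : Lang)
  (p : seq (Fm X) * seq (Fm X)) :
  T (size p.1) (size p.2) ->
  T (size (map (@Var Y) (iota 0 (size p.1))))
    (size (map (@Var Y) (iota (size p.1) (size p.2)))).
Proof. by rewrite !size_map !size_iota. Qed.

Definition iDom (k : DomKind) (L L1 : Lang) (E : expansion L L1) : Dom k L -> Dom k L1 :=
  match k return Dom k L -> Dom k L1 with
  | DFm => fun t => embF E t
  | DEq => fun e => (embF E e.1, embF E e.2)
  | DSeq T => fun x =>
      exist (fun p : seq (Fm L1) * seq (Fm L1) => T (size p.1) (size p.2))
            (map (embF E) (sval x).1, map (embF E) (sval x).2)
            (@seq_map_ok L L1 T (embF E) (sval x) (svalP x))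
  end.

Definition gen (k : DomKind) (X Y : Lang) : Dom k X -> Dom k Y :=
  match k return Dom k X -> Dom k Y with
  | DFm => fun _ => Var 0
  | DEq => fun _ => (Var 0, Var 1)
  | DSeq T => fun x =>
      exist (fun p : seq (Fm Y) * seq (Fm Y) => T (size p.1) (size p.2))
            (map (@Var Y) (iota 0 (size (sval x).1)),
             map (@Var Y) (iota (size (sval x).1) (size (sval x).2)))
            (@gen_ok X T Y (sval x) (svalP x))
  end.

Definition slots (k : DomKind) (X : Lang) : Dom k X -> seq (Fm X) :=
  match k return Dom k X -> seq (Fm X) with
  | DFm => fun t => [:: t]
  | DEq => fun e => [:: e.1; e.2]
  | DSeq T => fun x => (sval x).1 ++ (sval x).2
  end.

Definition nthsub (X : Lang) (l : seq (Fm X)) : Subst X := fun v => nth (Var 0) l v.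

Section DomLemmas2.
Variable k : DomKind.

Lemma slots_dsubst (X : Lang) (s : Subst X) (d : Dom k X) :
  slots (dsubst s d) = map (subst s) (slots d).
Proof. by case: k d => [d|d|T d] //=; rewrite map_cat. Qed.

Lemma slots_iDom (L L1 : Lang) (E : expansion L L1) (d : Dom k L) :
  slots (iDom E d) = map (embF E) (slots d).
Proof. by case: k d => [d|d|T d] //=; rewrite map_cat. Qed.

Lemma gen_dsubst (X Y : Lang) (s : Subst X) (d : Dom k X) :
  gen Y (dsubst s d) = gen Y d.
Proof. case: k d => [d|d|T d] //=; apply: sig_eqP => /=; by rewrite !size_map. Qed.

Lemma gen_iDom (L L1 Y : Lang) (E : expansion L L1) (d : Dom k L) :
  gen Y (iDom E d) = gen Y d.
Proof. case: k d => [d|d|T d] //=; apply: sig_eqP => /=; by rewrite !size_map. Qed.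

Lemma iDom_gen (L L1 X : Lang) (E : expansion L L1) (d : Dom k X) :
  iDom E (gen L d) = gen L1 d.
Proof. case: k d => [d|d|T d] //=; apply: sig_eqP => /=; by rewrite -!map_comp. Qed.

Lemma gen_rebuild (X : Lang) (d : Dom k X) :
  dsubst (nthsub (slots d)) (gen X d) = d.
Proof.
case: k d => [d|[a b]|T [[l1 l2] p]] //=; apply: sig_eqP => /=.
rewrite -!map_comp; congr pair.
- rewrite (@eq_map _ _ _ (nth (Var 0) (l1 ++ l2))) //.
  rewrite -/(mkseq _ _); apply: (@eq_from_nth _ (Var 0)); rewrite size_mkseq //.
  by move=> i Hi; rewrite nth_mkseq // nth_cat Hi.
- rewrite (@eq_map _ _ _ (nth (Var 0) (l1 ++ l2))) //.
  apply: (@eq_from_nth _ (Var 0)); rewrite size_map size_iota //.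
  move=> i Hi; rewrite (nth_map 0); last by rewrite size_iota.
  by rewrite nth_iota // nth_cat ltnNge leq_addr /= addKn.
Qed.

Lemma gen_agree (X Y : Lang) (d : Dom k X) (s s' : Subst Y) :
  (forall v, v < size (slots d) -> s v = s' v) ->
  dsubst s (gen Y d) = dsubst s' (gen Y d).
Proof.
case: k d => [d|[a b]|T [[l1 l2] p]] /= H.
- by rewrite H.
- by rewrite !H.
- apply: sig_eqP => /=; rewrite -!map_comp; congr pair; apply/eq_in_map => v;
  rewrite mem_iota => /andP [_ Hv] /=; apply: H; rewrite size_cat //.
  by apply: leq_trans Hv (leq_addr _ _).
Qed.

Lemma gen_Var (X Y : Lang) (d : Dom k X) : dsubst (@Var Y) (gen Y d) = gen Y d.
Proof.
case: k d => [d|[a b]|T [[l1 l2] p]] //=; apply: sig_eqP => /=.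
by rewrite -!map_comp.
Qed.
End DomLemmas2.

Lemma pset_ext (X : Type) (P Q : pset X) : (forall x, P x <-> Q x) -> P = Q.
Proof.
move=> h; apply: functional_extensionality => x;
apply: propositional_extensionality; exact: h.
Qed.

Section ThLemmas.
Variables (k : DomKind) (L : Lang) (vd : pset (Dom k L) -> Dom k L -> Prop).
Hypothesis H : conseq vd.

Definition ghat (d : Dom k L) : ThCar vd :=
  exist _ (gamma vd (fun x => x = d)) (gamma_theory H _).

Lemma th_eq (y z : ThCar vd) : (forall x, sval y x <-> sval z x) -> y = z.
Proof. by move=> h; apply: sig_eqP; apply: pset_ext. Qed.

Lemma th_closed (y : ThCar vd) P x : (forall u, P u -> sval y u) -> vd P x -> sval y x.
Proof.
case: y => y /= hy hP hx; rewrite -hy /gamma.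
apply: (cq_cut H) hx => u /hP; exact: (cq_refl H).
Qed.

Lemma act_ghat (t : Subst L) (d : Dom k L) :
  th_act H (fun u => u = t) (ghat d) = ghat (dsubst t d).
Proof.
apply: th_eq => x /=; rewrite /gamma; split => hx.
- apply: (cq_cut H) hx => u [s [w [-> [hw ->]]]].
  have := (cq_struct H t hw); apply: (cq_mono H) => z [s' [w' [-> [-> ->]]]] //.
- apply: (cq_cut H) hx => u ->; apply: (cq_refl H).
  by exists t, d; split => //; split => //; apply: (cq_refl H).
Qed.

Lemma th_decomp (y : ThCar vd) :
  y = th_jn H (fun z => exists d, sval y d /\ z = ghat d).
Proof.
apply: th_eq => x /=; rewrite /gamma; split => hx.
- apply: (cq_refl H); exists (ghat x); split; first by exists x.
  by apply: (cq_refl H).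
- apply: th_closed hx => u [P [[d [hd ->]]]] /= hu.
  by apply: th_closed hu => w ->.
Qed.
End ThLemmas.

Section Tens.
Variables (L L1 : Lang) (E : expansion L L1) (k : DomKind)
  (vd : pset (Dom k L) -> Dom k L -> Prop) (H : conseq vd).

Local Notation TXt := (TX L1 H).
Local Notation cg := (@tens_cong L L1 E k vd H).

Definition sing (p : TXt) : pset TXt := fun q => q = p.
Definition bunion (A B : pset TXt) : pset TXt := fun p => A p \/ B p.
Definition bigU (I : Type) (F : I -> pset TXt) : pset TXt := fun p => exists i, F i p.
Definition tle (A B : pset TXt) := cg (bunion A B) B.

Lemma cg_supcong : supcong cg.
Proof.
split; [|split; [|split]].
- by move=> A R [r _] _; apply: r.
- by move=> A B h R hR hg; case: (hR) => _ [s _]; apply: s; apply: h.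
- move=> A B C h1 h2 R hR hg; case: (hR) => _ [_ [t _]]; apply: t (h1 R hR hg) (h2 R hR hg).
- move=> I F G h R hR hg; case: (hR) => _ [_ [_ u]]; apply: u => i; exact: h.
Qed.

Lemma cg_refl A : cg A A. Proof. by case: cg_supcong. Qed.
Lemma cg_sym A B : cg A B -> cg B A. Proof. by move=> h; case: cg_supcong => _ [s _]; apply: s. Qed.
Lemma cg_trans A B C : cg A B -> cg B C -> cg A C.
Proof. by move=> h1 h2; case: cg_supcong => _ [_ [t _]]; apply: t h1 h2. Qed.
Lemma cg_U I (F G : I -> pset TXt) : (forall i, cg (F i) (G i)) -> cg (bigU F) (bigU G).
Proof. by move=> h; case: cg_supcong => _ [_ [_ u]]; apply: u. Qed.
Lemma cg_gen A B : tens_gen E A B -> cg A B.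
Proof. by move=> h R _ hg; apply: hg. Qed.

Lemma bunion_U A B : bunion A B = bigU (fun b : bool => if b then A else B).
Proof.
apply: pset_ext => p; split; first by case=> h; [exists true|exists false].
by case=> [[]] h; [left|right].
Qed.

Lemma cg_bin A A' B B' : cg A A' -> cg B B' -> cg (bunion A B) (bunion A' B').
Proof. by move=> h1 h2; rewrite !bunion_U; apply: cg_U => -[]. Qed.

Lemma cg_eq A B : A = B -> cg A B.
Proof. by move=> ->; apply: cg_refl. Qed.

Lemma tle_refl A : tle A A.
Proof. by apply: cg_eq; apply: pset_ext => p; split => [[]|]; [| |left]. Qed.

Lemma sub_tle A B : (forall p, A p -> B p) -> tle A B.
Proof. by move=> h; apply: cg_eq; apply: pset_ext => p; split => [[/h|]|]; [| |right]. Qed.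

Lemma cg_tle A B : cg A B -> tle A B.
Proof.
move=> h; apply: cg_trans (cg_bin h (cg_refl B)) _; exact: tle_refl.
Qed.

Lemma tle_trans A B C : tle A B -> tle B C -> tle A C.
Proof.
move=> h1 h2.
have e1 : cg (bunion A C) (bunion A (bunion B C)) by apply: cg_bin (cg_refl A) (cg_sym h2).
have e2 : bunion A (bunion B C) = bunion (bunion A B) C.
  by apply: pset_ext => p; rewrite /bunion; tauto.
apply: cg_trans e1 _; rewrite e2; apply: cg_trans (cg_bin h1 (cg_refl C)) _; exact: h2.
Qed.

Lemma tle_cg A B : tle A B -> tle B A -> cg A B.
Proof.
move=> h1 h2; apply: cg_trans (cg_sym h2) _.
have -> : bunion B A = bunion A B by apply: pset_ext => p; rewrite /bunion; tauto.
exact: h1.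
Qed.

Lemma tle_U I (F : I -> pset TXt) B : (forall i, tle (F i) B) -> tle (bigU F) B.
Proof.
move=> h; rewrite /tle.
have -> : bunion (bigU F) B =
  bigU (fun o : option I => match o with Some i => bunion (F i) B | None => B end).
  apply: pset_ext => p; split.
  - by case=> [[i hi]|hb]; [exists (Some i); left|exists None].
  - by case=> -[i [hi|hb]|hb]; [left; exists i|right|right].
apply: (@cg_trans _ (bigU (fun o : option I => B))).
  by apply: cg_U => -[i|]; [apply: h|apply: cg_refl].
by apply: cg_eq; apply: pset_ext => p; split => [[_ //]|hb]; exists None.
Qed.

Lemma tle_pts A B : (forall p, A p -> tle (sing p) B) -> tle A B.
Proof.
move=> h.
have -> : A = bigU (fun q : {p | A p} => sing (sval q)).
  apply: pset_ext => p; split => [hp|[[q hq] /= ->] //]; by exists (exist _ p hp).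
by apply: tle_U => -[q hq]; apply: h.
Qed.

Lemma tle_sing_in p A : A p -> tle (sing p) A.
Proof. by move=> h; apply: sub_tle => q ->. Qed.

Lemma cg_tle_l A A' B : cg A A' -> tle A' B -> tle A B.
Proof. by move=> h; apply: tle_trans; apply: cg_tle. Qed.
Lemma tle_cg_r A B B' : tle A B -> cg B B' -> tle A B'.
Proof. by move=> h1 h2; apply: tle_trans h1 _; apply: cg_tle. Qed.

Definition one (s : Subst L1) : pset (Subst L1) := fun u => u = s.

Lemma G1 Xs y : cg (sing (qunion Xs, y)) (fun p => Xs p.1 /\ p.2 = y).
Proof. by apply: cg_gen; left; exists Xs, y. Qed.
Lemma G2 x Ys : cg (sing (x, th_jn H Ys)) (fun p => p.1 = x /\ Ys p.2).
Proof. by apply: cg_gen; right; left; exists x, Ys. Qed.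
Lemma G3 x a y : cg (sing (qmul x (iset E a), y)) (sing (x, th_act H a y)).
Proof. by apply: cg_gen; right; right; exists x, a, y. Qed.

Lemma split_first x y :
  cg (sing (x, y)) (fun p => exists s, x s /\ p = (one s, y)).
Proof.
set Xs := fun X => exists s, x s /\ X = one s.
have ex : x = qunion Xs.
  apply: pset_ext => u; split => [hu|[X [[s [hs ->]] ->]] //].
  by exists (one u); split => //; exists u.
rewrite {1}ex; apply: cg_trans (G1 _ _) (cg_eq _).
apply: pset_ext => -[X z] /=; split.
- by case=> -[s [hs ->]] ->; exists s.
- by case=> s [hs [-> ->]]; split => //; exists s.
Qed.

Lemma qmul_one (s : Subst L1) (t : Subst L) :
  qmul (one s) (iset E (fun u => u = t)) = one (scomp s (iSub E t)).
Proof.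
apply: pset_ext => u; split.
- by case=> s' [t' [-> [[t'' [-> ->]] ->]]].
- by move=> ->; exists s, (iSub E t); split => //; split => //; exists t.
Qed.

Lemma G3s s t y :
  cg (sing (one (scomp s (iSub E t)), y)) (sing (one s, th_act H (fun u => u = t) y)).
Proof. rewrite -qmul_one; exact: G3. Qed.

Lemma tle_second x (y y' : ThCar vd) :
  (forall d, sval y d -> sval y' d) -> tle (sing (x, y)) (sing (x, y')).
Proof.
move=> h.
have ey : y' = th_jn H (fun z => z = y \/ z = y').
  apply: th_eq => d /=; split => hd.
  - by apply: (cq_refl H); exists y'; split => //; right.
  - rewrite /gamma in hd; apply: (th_closed H) hd => u [z [[->|->] hu]] //; exact: h.
rewrite ey; apply: tle_cg_r (cg_sym (G2 _ _)).
by apply: sub_tle => q ->; split => //; left.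
Qed.

Definition Mact (a : pset (Subst L1)) (A : pset TXt) : pset TXt :=
  fun p => exists x y, A (x, y) /\ p = (qmul a x, y).

Lemma scomp_assoc (X : Lang) (s t u : Subst X) :
  scomp s (scomp t u) = scomp (scomp s t) u.
Proof. apply: functional_extensionality => v; exact: subst_comp. Qed.

Lemma qmul_assoc (a b c : pset (Subst L1)) : qmul a (qmul b c) = qmul (qmul a b) c.
Proof.
apply: pset_ext => u; split.
- case=> s [w [hs [[t [v [ht [hv ->]]]] ->]]].
  by exists (scomp s t), v; split; [exists s, t|split => //; rewrite scomp_assoc].
- case=> w [v [[s [t [hs [ht ->]]]] [hv ->]]].
  by exists s, (scomp t v); split => //; split; [exists t, v|rewrite scomp_assoc].
Qed.

Lemma Mact_sing a x y : Mact a (sing (x, y)) = sing (qmul a x, y).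
Proof.
apply: pset_ext => p; split; first by case=> x' [y' [[-> ->] ->]].
by move=> ->; exists x, y.
Qed.

Lemma Mact_U a I (F : I -> pset TXt) : Mact a (bigU F) = bigU (fun i => Mact a (F i)).
Proof.
apply: pset_ext => p; split.
- by case=> x [y [[i hi] ->]]; exists i, x, y.
- by case=> i [x [y [hi ->]]]; exists x, y; split => //; exists i.
Qed.

Lemma Mact_cong a A B : cg A B -> cg (Mact a A) (Mact a B).
Proof.
move=> h; apply: (h (fun A B => cg (Mact a A) (Mact a B))).
- split; [|split; [|split]].
  + by move=> A'; apply: cg_refl.
  + by move=> A' B'; apply: cg_sym.
  + by move=> A' B' C'; apply: cg_trans.
  + by move=> I F G hFG; rewrite !Mact_U; apply: cg_U.
- move=> A' B' [[Xs [y [-> ->]]]|[[x [Ys [-> ->]]]|[x [b [y [-> ->]]]]]].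
  + set Xs' := fun Z => exists x, Xs x /\ Z = qmul a x.
    have -> : Mact a (fun p => p = (qunion Xs, y)) = sing (qunion Xs', y).
      rewrite -/(sing _) Mact_sing; congr (sing (_, _)).
      apply: pset_ext => u; split.
      * case=> s [t [hs [[X [hX ht]] ->]]].
        by exists (qmul a X); split; [exists X|exists s, t].
      * case=> Z [[X [hX ->]] [s [t [hs [ht ->]]]]].
        by exists s, t; split => //; split => //; exists X.
    apply: cg_trans (G1 _ _) (cg_eq _); apply: pset_ext => -[z w] /=; split.
    * by case=> -[x [hx ->]] ->; exists x, y.
    * case=> x1 [y1 [[hx e] [-> ->]]]; simpl in hx, e; subst y1; split => //; by exists x1.
  + apply: cg_trans (cg_eq _) (cg_trans (G2 (qmul a x) Ys) (cg_eq _)).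
    * by rewrite -/(sing _) Mact_sing.
    * apply: pset_ext => -[z w] /=; split.
      - by case=> -> hw; exists x, w.
      - case=> x1 [y1 [[e hy] [-> ->]]]; simpl in e, hy; subst x1; by split.
  + rewrite -!/(sing _) !Mact_sing qmul_assoc; exact: G3.
Qed.

Lemma Mact_bunion a A B : Mact a (bunion A B) = bunion (Mact a A) (Mact a B).
Proof. by rewrite !bunion_U Mact_U; congr bigU; apply: functional_extensionality => -[]. Qed.

Lemma Mact_tle a A B : tle A B -> tle (Mact a A) (Mact a B).
Proof. by move=> h; rewrite /tle -Mact_bunion; apply: Mact_cong. Qed.

Definition app (s : Subst L1) (d : Dom k L) : Dom k L1 := dsubst s (iDom E d).
Definition Rp (s : Subst L1) (d : Dom k L) : pset TXt := sing (one s, ghat H d).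

Lemma app_comp s t d : app (scomp s t) d = dsubst s (app t d).
Proof. by rewrite /app dsubst_comp. Qed.

Lemma app_surj (x : Dom k L1) : app (nthsub (slots x)) (gen L x) = x.
Proof. by rewrite /app iDom_gen gen_rebuild. Qed.

Lemma shift s t d : cg (Rp (scomp s (iSub E t)) d) (Rp s (dsubst t d)).
Proof. by rewrite /Rp -act_ghat; apply: G3s. Qed.

Lemma AV (d0 : Dom k L) (a b : Subst L1) :
  (forall v, v < size (slots d0) -> a v = b v) ->
  cg (Rp a (gen L d0)) (Rp b (gen L d0)).
Proof.
move=> hab; set n := size (slots d0); set g := gen L d0.
pose rho : Subst L1 := fun v => if v < n then a v else
  if odd (v - n) then b (n + (v - n)./2) else a (n + (v - n)./2).
pose r1 : Subst L := fun v => if v < n then Var v else Var (n + (v - n).*2).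
pose r2 : Subst L := fun v => if v < n then Var v else Var (n + (v - n).*2.+1).
have fix1 : dsubst r1 g = g.
  rewrite /g -[in RHS](gen_Var L d0); apply: gen_agree => v hv; by rewrite /r1 hv.
have fix2 : dsubst r2 g = g.
  rewrite /g -[in RHS](gen_Var L d0); apply: gen_agree => v hv; by rewrite /r2 hv.
have e1 : scomp rho (iSub E r1) = a.
  apply: functional_extensionality => v; rewrite /scomp /iSub /r1.
  case: ifP => hv /=; first by rewrite /rho hv.
  rewrite /rho ltnNge leq_addr /= addKn odd_double /= doubleK.
  by rewrite subnKC // leqNgt hv.
have e2 : scomp rho (iSub E r2) = b.
  apply: functional_extensionality => v; rewrite /scomp /iSub /r2.
  case: ifP => hv /=; first by rewrite /rho hv hab.
  rewrite /rho ltnNge leq_addr /= addKn /=.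
  rewrite odd_double /= uphalf_double.
  by rewrite subnKC // leqNgt hv.
apply: cg_trans (cg_eq _) (cg_trans (shift rho r1 g) _); first by rewrite e1.
rewrite fix1; apply: cg_sym; apply: cg_trans (cg_eq _) (cg_trans (shift rho r2 g) _).
  by rewrite e2.
by rewrite fix2; apply: cg_refl.
Qed.

Lemma gen_app s d : gen L (app s d) = gen L d.
Proof. by rewrite /app gen_dsubst gen_iDom. Qed.

Lemma RI s d s' d' : app s d = app s' d' -> cg (Rp s d) (Rp s' d').
Proof.
move=> e.
have eg : gen L d' = gen L d by rewrite -(gen_app s' d') -e gen_app.
have es : map (subst s) (map (embF E) (slots d)) = map (subst s') (map (embF E) (slots d')).
  by rewrite -slots_iDom -slots_dsubst -slots_iDom -slots_dsubst; congr slots.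
have ez : size (slots d') = size (slots d).
  by move/(congr1 size): es; rewrite !size_map.
rewrite -{1}(gen_rebuild d) -{1}(gen_rebuild d').
apply: cg_trans (cg_sym (shift _ _ _)) _.
apply: cg_trans _ (shift _ _ _).
rewrite eg; apply: AV => v hv; rewrite /scomp /iSub /nthsub.
move/(congr1 (fun l => nth (Var 0) l v)): es.
rewrite (nth_map (embF E (Var 0))) ?size_map // (nth_map (Var 0)) //.
rewrite (nth_map (embF E (Var 0))) ?size_map ?ez // (nth_map (Var 0)) ?ez //.
Qed.

Definition Pt (P : pset (Dom k L1)) : pset TXt :=
  fun p => exists s d, P (app s d) /\ p = (one s, ghat H d).

Definition vd1 (P : pset (Dom k L1)) (x : Dom k L1) : Prop :=
  forall s d, app s d = x -> tle (Rp s d) (Pt P).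

Lemma qmul_one1 (s t : Subst L1) : qmul (one s) (one t) = one (scomp s t).
Proof.
apply: pset_ext => u; split; first by case=> s' [t' [-> [-> ->]]].
by move=> ->; exists s, t.
Qed.

Lemma vd1_conseq : conseq vd1.
Proof.
split.
- move=> P x hx s d e; apply: tle_sing_in; exists s, d; split => //; by rewrite e.
- move=> P Q x hPQ h s d e; apply: tle_trans (h s d e) (sub_tle _).
  by move=> p [s' [d' [hp ->]]]; exists s', d'; split => //; apply: hPQ.
- move=> P Q x hQ h s d e; apply: tle_trans (h s d e) _.
  apply: tle_pts => p [s' [d' [hq ->]]]; exact: (hQ _ hq s' d' erefl).
- move=> t P x h s d e.
  set s0 := nthsub (slots x); set d0 := gen L x.
  have e' : app s d = app (scomp t s0) d0 by rewrite app_comp app_surj.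
  apply: cg_tle_l (RI e') _.
  have -> : Rp (scomp t s0) d0 = Mact (one t) (Rp s0 d0).
    by rewrite /Rp Mact_sing qmul_one1.
  apply: tle_trans (Mact_tle (one t) (h s0 d0 (app_surj x))) (sub_tle _).
  move=> p [x' [y' [[s' [d' [hp [-> ->]]]] ->]]].
  exists (scomp t s'), d'; split; last by rewrite qmul_one1.
  by exists t, (app s' d'); split => //; split => //; rewrite app_comp.
Qed.

Lemma Pt_vd1 Q : cg (Pt (vd1 Q)) (Pt Q).
Proof.
apply: tle_cg.
- by apply: tle_pts => p [s [d [hq ->]]]; apply: hq.
- apply: sub_tle => p [s [d [hq ->]]]; exists s, d; split => //.
  exact: (cq_refl vd1_conseq).
Qed.

Lemma tcls_eq A B : cg A B -> tcls E A = tcls E B.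
Proof.
move=> h; apply: sig_eqP => /=; apply: pset_ext => X; split => hX.
- exact: cg_trans (cg_sym h) hX.
- exact: cg_trans h hX.
Qed.

Lemma TCar_rep (C : TCar E H) : exists A0, C = tcls E A0.
Proof. case: C => c [A0 e]; exists A0; apply: sig_eqP => /=; exact: e. Qed.

Definition Gset (C : TCar E H) (x : Dom k L1) : Prop :=
  forall s d, app s d = x -> exists A, sval C A /\ tle (Rp s d) A.

Lemma Gset_iff A0 x :
  Gset (tcls E A0) x <-> (forall s d, app s d = x -> tle (Rp s d) A0).
Proof.
split => h s d e.
- case: (h s d e) => A /= [hA hle]; exact: tle_cg_r hle (cg_sym hA).
- by exists A0; split; [apply: cg_refl|apply: h].
Qed.

Lemma Gset_theory C : theory vd1 (Gset C).
Proof.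
case: (TCar_rep C) => A0 ->.
apply: pset_ext => x; rewrite /gamma; split => h.
- apply/Gset_iff => s d e; apply: tle_trans (h s d e) _.
  by apply: tle_pts => p [s' [d' [hg ->]]]; move/Gset_iff: hg; apply.
- exact: (cq_refl vd1_conseq).
Qed.

Definition Fmap (T : ThCar vd1) : TCar E H := tcls E (Pt (sval T)).
Definition Gmap (C : TCar E H) : ThCar vd1 := exist _ (Gset C) (Gset_theory C).

Lemma GF T : Gmap (Fmap T) = T.
Proof.
apply: sig_eqP => /=; apply: pset_ext => x; rewrite Gset_iff.
case: T => P hP /=; rewrite -{2}hP /gamma; split; by [].
Qed.

Lemma tle_Rp_of_mem A0 x (y : ThCar vd) s d :
  A0 (x, y) -> x s -> sval y d -> tle (Rp s d) A0.
Proof.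
move=> hA hs hd.
apply: (@tle_trans _ (sing (one s, y))).
  rewrite /Rp; apply: tle_second => u /= hu; apply: (th_closed H) hu => w ->.
  by case: y hA hd => yy hy /= _ hd; rewrite -hy /gamma; apply: (cq_refl H).
apply: (@tle_trans _ (sing (x, y))); last exact: tle_sing_in.
apply: tle_cg_r (tle_sing_in _) (cg_sym (split_first x y)); by exists s.
Qed.

Lemma FG C : Fmap (Gmap C) = C.
Proof.
case: (TCar_rep C) => A0 ->; apply: tcls_eq; apply: tle_cg.
- apply: tle_pts => p [s [d [hg ->]]]; move/Gset_iff: hg; apply; done.
- apply: tle_pts => -[x y] hA; apply: cg_tle_l (split_first x y) _.
  apply: tle_pts => q [s [hs ->]].
  apply: cg_tle_l (cg_eq _) (cg_tle_l (G2 _ _) _).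
    by rewrite {1}(th_decomp H y).
  apply: tle_pts => -[z w] /= [-> [d [hd ->]]]; apply: tle_sing_in.
  exists s, d; split => //; apply/Gset_iff => s' d' e.
  apply: cg_tle_l (RI e) _; exact: tle_Rp_of_mem hA hs hd.
Qed.

Lemma F_jn (S : pset (ThCar vd1)) :
  Fmap (th_jn vd1_conseq S) = t_jn (fun z => exists T, S T /\ z = Fmap T).
Proof.
apply: tcls_eq; apply: cg_trans (Pt_vd1 _) _; apply: tle_cg.
- apply: sub_tle => p [s [d [[P [hP hx]] ->]]].
  exists (Fmap P), (Pt (sval P)); split; first by exists P.
  split; first exact: cg_refl.
  by exists s, d.
- apply: tle_pts => p [C [A [[T [hT ->]] [hA hp]]]].
  apply: tle_trans (tle_sing_in hp) _; apply: cg_tle_l (cg_sym hA) _.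
  by apply: sub_tle => q [s [d [hq ->]]]; exists s, d; split => //; exists T.
Qed.

Lemma F_act a (T : ThCar vd1) :
  Fmap (th_act vd1_conseq a T) = t_act a (Fmap T).
Proof.
apply: tcls_eq; apply: cg_trans (Pt_vd1 _) _.
apply: (@cg_trans _ (Mact a (Pt (sval T)))); last first.
  apply: tle_cg.
  - by apply: sub_tle => p [x [y [hp ->]]]; exists (Pt (sval T)), x, y; split => //; apply: cg_refl.
  - apply: tle_pts => p [A [x [y [hA [hxy ->]]]]].
    apply: tle_trans (tle_sing_in (A := Mact a A) _) _; first by exists x, y.
    apply: cg_tle; apply: Mact_cong; exact: cg_sym.
apply: tle_cg.
- apply: tle_pts => p [s [d [[t [x0 [ha [hx0 e]]]] ->]]].
  set s0 := nthsub (slots x0); set d0 := gen L x0.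
  have e' : app s d = app (scomp t s0) d0 by rewrite app_comp app_surj.
  apply: cg_tle_l (RI e') _.
  apply: (@tle_trans _ (sing (qmul a (one s0), ghat H d0))).
  + rewrite /Rp; apply: tle_cg_r (tle_sing_in _) (cg_sym (split_first _ _)).
    by exists (scomp t s0); split => //; exists t, s0.
  + apply: sub_tle => q ->; exists (one s0), (ghat H d0); split => //.
    by exists s0, d0; split => //; rewrite app_surj.
- apply: tle_pts => p [x [y [[s [d [hT [-> ->]]]] ->]]].
  apply: cg_tle_l (split_first _ _) _; apply: sub_tle => q [u [[t [s' [ht [-> ->]]]] ->]].
  exists (scomp t s), d; split => //.
  by exists t, (app s d); split => //; split => //; rewrite app_comp.
Qed.

End Tens.

Theorem proposition3p2 (L L1 : Lang) (E : expansion L L1) (k : DomKind)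
  (vd : pset (Dom k L) -> Dom k L -> Prop) (H : conseq vd) :
  exists (vd1 : pset (Dom k L1) -> Dom k L1 -> Prop) (H1 : conseq vd1),
    module_iso (ThMod H1) (TensorMod E H).
Proof.
exists (vd1 E H), (vd1_conseq E H), (@Fmap _ _ E _ _ H); split; last split.
- by exists (@Gmap _ _ E _ _ H); [exact: GF|exact: FG].
- exact: F_jn.
- exact: F_act.
Qed.
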